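(* (i) With $a=1$, $\boldsymbol{\alpha}_0=\boldsymbol{\beta}_0=1$ and for $n\ge1$ \[ \boldsymbol{\alpha}_n(1,k)=q^{-n}-q^{n},\qquad \boldsymbol{\beta}_n(1,k)=\frac{(k,k;q)_{n}(1-2kq^n+kq^{2n})}{(1-k)q^{n}(q,q;q)_n}, \] the pair $(\boldsymbol{\alpha}_n,\boldsymbol{\beta}_n)$ is a WP-Bailey pair relative to $a=1$. (ii) With $a=q$, $\boldsymbol{\alpha}_0=\boldsymbol{\beta}_0=1$ and for $n\ge1$ \[ \boldsymbol{\alpha}_n(q,k)=q^{-n}-q^{n+1},\qquad \boldsymbol{\beta}_n(q,k)=\frac{(k;q)_{n}(k;q)_{n-1}(1-kq^{n-1}-kq^n+kq^{2n})}{q^n(q,q^2;q)_n}, \] the pair $(\boldsymbol{\alpha}_n,\boldsymbol{\beta}_n)$ is a WP-Bailey pair relative to $a=q$.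
   Context: Notation: $(x;q)_n=\prod_{i=0}^{n-1}(1-xq^i)$, $(x_1,\dots,x_j;q)_n=(x_1;q)_n\cdots(x_j;q)_n$. A pair of sequences $(\boldsymbol{\alpha}_n(a,k,q),\boldsymbol{\beta}_n(a,k,q))_{n\ge0}$ is a WP-Bailey pair (relative to $a$, with parameter $k$) if $\boldsymbol{\alpha}_0=1$ and for all $n\ge0$ \[\boldsymbol{\beta}_n=\sum_{j=0}^n\frac{(k/a;q)_{n-j}(k;q)_{n+j}}{(q;q)_{n-j}(aq;q)_{n+j}}\boldsymbol{\alpha}_j.\] $k\neq1$ and parameters generic. *)

(* Defs.v *)
From HB Require Import structures.
From mathcomp Require Import all_boot all_order all_algebra.
Set Implicit Arguments. Unset Strict Implicit. Unset Printing Implicit Defensive.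
Import Order.TTheory GRing.Theory Num.Theory.
Local Open Scope ring_scope.

Definition qpoch (F : fieldType) (x q : F) (n : nat) : F :=
  \prod_(i < n) (1 - x * q ^+ i).

Definition WP_Bailey_pair (F : fieldType) (a k q : F)
    (alpha beta : nat -> F) : Prop :=
  alpha 0%N = 1 /\
  forall n : nat,
    beta n = \sum_(j < n.+1)
      (qpoch (k / a) q (n - j) * qpoch k q (n + j)
        / (qpoch q q (n - j) * qpoch (a * q) q (n + j))) * alpha j.

(* Main.v *)
Require Import Defs.
From HB Require Import structures.
From mathcomp Require Import all_boot all_order all_algebra.
From mathcomp Require Import ring.
Import GRing.Theory.
Local Open Scope ring_scope.

Section H.
Variable F : fieldType.
Implicit Types x q : F.

Lemma qpoch0 x q : qpoch x q 0 = 1.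
Proof. by rewrite /qpoch big_ord0. Qed.

Lemma qpochS x q n : qpoch x q n.+1 = qpoch x q n * (1 - x * q ^+ n).
Proof. by rewrite /qpoch big_ord_recr. Qed.

Lemma qpochSl x q n : qpoch x q n.+1 = (1 - x) * qpoch (x * q) q n.
Proof.
rewrite /qpoch big_ord_recl expr0 mulr1; congr (_ * _).
by apply: eq_bigr => i _; rewrite /= exprS mulrA.
Qed.

Lemma qpoch_neq0 q s m : (forall i : nat, (0 < i)%N -> q ^+ i != 1) ->
  qpoch (q ^+ s.+1) q m != 0.
Proof.
move=> hq; elim: m => [|m IH]; first by rewrite qpoch0 oner_neq0.
rewrite qpochS mulf_neq0 // subr_eq0 eq_sym -exprD hq //.
Qed.

Lemma tele (f G : nat -> F) N :
  (forall j, (0 < j)%N -> (j <= N)%N -> f j = G j - G j.+1) ->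
  \sum_(i < N) f (@lift N.+1 ord0 i) = G 1%N - G N.+1.
Proof.
move=> H.
suff: forall p, (p <= N)%N -> \sum_(i < p) f i.+1 = G 1%N - G p.+1.
  by move=> /(_ N (leqnn N)) <-.
elim=> [|p IH] hp; first by rewrite big_ord0 subrr.
rewrite big_ord_recr /= IH ?(ltnW hp) // H //.
by rewrite addrA subrK.
Qed.
Definition f1 q k (N j : nat) : F :=
  qpoch (k / 1) q (N - j) * qpoch k q (N + j)
  / (qpoch q q (N - j) * qpoch (1 * q) q (N + j))
  * (if j == 0%N then 1 else q ^- j - q ^+ j).

Definition G1 q k (N m : nat) : F :=
  (q ^- N - q ^+ m) / (1 - k) * qpoch k q (N.+1 - m) * qpoch k q (N + m)
  * (1 - q ^+ (N.+1 - m)) / (qpoch q q (N.+1 - m) * qpoch q q (N + m)).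

Lemma step1 q k N j (hq0 : q != 0) (hq : forall i : nat, (0 < i)%N -> q ^+ i != 1)
    (hk : k != 1) : (0 < j)%N -> (j <= N)%N -> f1 q k N j = G1 q k N j - G1 q k N j.+1.
Proof.
move=> j0 jN.
have [r ->] : exists r, N = (j + r)%N by exists (N - j)%N; rewrite subnKC.
case: j j0 {jN} => // j _.
rewrite /f1 /G1 divr1 mul1r.
have e1 : (j.+1 + r - j.+1 = r)%N by rewrite addKn.
have e2 : ((j.+1 + r).+1 - j.+1 = r.+1)%N by rewrite -addnS addKn.
have e3 : ((j.+1 + r).+1 - j.+2 = r)%N by rewrite subSS addKn.
have -> : (j.+1 == 0%N) = false by [].
have eM2 : (j.+1 + r + j.+2 = (j.+1 + r + j.+1).+1)%N by rewrite addnS.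
rewrite e1 e2 e3 eM2.
have eM : q ^+ (j.+1 + r + j.+1)%N = q * q ^+ j * q ^+ r * (q * q ^+ j).
  by rewrite !exprD !exprS mulrA.
set M := (j.+1 + r + j.+1)%N in eM *.
clearbody M.
have qq : forall m, qpoch q q m = qpoch (q ^+ 0.+1) q m by move=> m; rewrite expr1.
have nq : forall m, qpoch q q m != 0 by move=> m; rewrite qq qpoch_neq0.
have nk : 1 - k != 0 by rewrite subr_eq0 eq_sym.
have ne : forall m, q ^+ m != 0 by move=> m; rewrite expf_neq0.
have n1 : forall m, 1 - q * q ^+ m != 0.
  by move=> m; rewrite subr_eq0 eq_sym -exprS hq.
rewrite (qpochS k q r) (qpochS q q r) (qpochS k q M) (qpochS q q M).
move: (nq r) (nq M) (n1 r) (n1 M).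
move: (qpoch q q r) (qpoch k q r) (qpoch q q M) (qpoch k q M) => A B C D nA nC h1 h2.
rewrite eM in h2 *.
rewrite !exprD !exprS.
move: (ne j) (ne r) h1 h2.
move: (q ^+ j) (q ^+ r) => y z ny nz h1 h2.
field.
by rewrite h2 nC nA nk nz ny hq0 h1.
Qed.


Lemma part1 q k (hq0 : q != 0) (hq : forall i : nat, (0 < i)%N -> q ^+ i != 1)
    (hk : k != 1) :
  WP_Bailey_pair 1 k q
    (fun n => if n == 0%N then 1 else q ^- n - q ^+ n)
    (fun n => if n == 0%N then 1 else
       qpoch k q n * qpoch k q n * (1 - 2 * k * q ^+ n + k * q ^+ (2 * n))
       / ((1 - k) * q ^+ n * (qpoch q q n * qpoch q q n))).
Proof.
split => // -[|n].
  rewrite big_ord1 /= !qpoch0.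
  by rewrite !(mul1r, invr1, mulr1).
rewrite (eq_bigr (fun j : 'I_n.+2 => f1 q k n.+1 j)) //.
rewrite big_ord_recl (@tele (f1 q k n.+1) (G1 q k n.+1)); last by move=> j j0 jN; apply: step1.
rewrite /f1 /G1 subnn expr0 subrr mulr0 mul0r subr0.
have -> : (n.+1 == 0%N) = false by [].
rewrite (_ : (nat_of_ord (@ord0 n.+1) == 0%N) = true) // subn0 addn0 divr1 mul1r mulr1.
rewrite subSS subn0 addn1 (qpochS k q n.+1) (qpochS q q n.+1).
rewrite (_ : (2 * n.+1)%N = (n.+1 + n.+1)%N); last by rewrite mul2n addnn.
rewrite exprD.
have qq : forall m, qpoch q q m = qpoch (q ^+ 0.+1) q m by move=> m; rewrite expr1.
have nq : forall m, qpoch q q m != 0 by move=> m; rewrite qq qpoch_neq0.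
have nk : 1 - k != 0 by rewrite subr_eq0 eq_sym.
have ne : forall m, q ^+ m != 0 by move=> m; rewrite expf_neq0.
have n1 : forall m, 1 - q * q ^+ m != 0.
  by move=> m; rewrite subr_eq0 eq_sym -exprS hq.
move: (nq n.+1) (n1 n.+1) (ne n.+1).
move: (qpoch q q n.+1) (qpoch k q n.+1) (q ^+ n.+1) => A B x nA h1 nx.
field.
by rewrite h1 nA nk nx.
Qed.

Definition f2 q k (N j : nat) : F :=
  qpoch (k / q) q (N - j) * qpoch k q (N + j)
  / (qpoch q q (N - j) * qpoch (q * q) q (N + j))
  * (if j == 0%N then 1 else q ^- j - q ^+ j.+1).

Definition G2 q k (N m : nat) : F :=
  (q ^- N - q ^+ m.+1) * qpoch k q (N - m) * qpoch k q (N + m)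
  * (1 - q ^+ (N.+1 - m)) / (qpoch q q (N.+1 - m) * qpoch (q * q) q (N + m)).

Lemma step2 q k N j (hq0 : q != 0) (hq : forall i : nat, (0 < i)%N -> q ^+ i != 1) :
  (0 < j)%N -> (j <= N)%N -> f2 q k N j = G2 q k N j - G2 q k N j.+1.
Proof.
move=> j0 jN.
have [r ->] : exists r, N = (j + r)%N by exists (N - j)%N; rewrite subnKC.
case: j j0 {jN} => // j _.
rewrite /f2 /G2.
have -> : (j.+1 == 0%N) = false by [].
have qq : forall m, qpoch q q m = qpoch (q ^+ 0.+1) q m by move=> m; rewrite expr1.
have nq : forall m, qpoch q q m != 0 by move=> m; rewrite qq qpoch_neq0.
have qq2 : forall m, qpoch (q * q) q m = qpoch (q ^+ 1.+1) q m by move=> m; rewrite expr2.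
have nq2 : forall m, qpoch (q * q) q m != 0 by move=> m; rewrite qq2 qpoch_neq0.
have ne : forall m, q ^+ m != 0 by move=> m; rewrite expf_neq0.
have n1 : forall m, 1 - q * q ^+ m != 0.
  by move=> m; rewrite subr_eq0 eq_sym -exprS hq.
have n2 : forall m, 1 - q * q * q ^+ m != 0.
  by move=> m; rewrite subr_eq0 eq_sym -mulrA -exprS -exprS hq.
case: r => [|r].
  rewrite addn0 subnn subSnn (_ : (j.+1 - j.+2 = 0)%N); last by apply/eqP; rewrite subn_eq0.
  rewrite subnn expr0 subrr mulr0 mul0r subr0 !qpoch0 (qpochS q q 0) qpoch0 expr0.
  move: (nq2 (j.+1 + j.+1)%N).
  move: (qpoch (q * q) q (j.+1 + j.+1)) (qpoch k q (j.+1 + j.+1)) => C D nC.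
  rewrite !exprS.
  move: (ne j) (n1 0%N); rewrite expr0 mulr1.
  move: (q ^+ j) => y ny h1.
  field.
  by rewrite nC h1 ny hq0.
have e1 : (j.+1 + r.+1 - j.+1 = r.+1)%N by rewrite addKn.
have e2 : ((j.+1 + r.+1).+1 - j.+1 = r.+2)%N by rewrite -addnS addKn.
have e3 : (j.+1 + r.+1 - j.+2 = r)%N by rewrite addnS subSS addKn.
have e4 : ((j.+1 + r.+1).+1 - j.+2 = r.+1)%N by rewrite subSS addKn.
have eM2 : (j.+1 + r.+1 + j.+2 = (j.+1 + r.+1 + j.+1).+1)%N by rewrite addnS.
rewrite e1 e2 e3 e4 eM2.
have eM : q ^+ (j.+1 + r.+1 + j.+1)%N = q * q ^+ j * (q * q ^+ r) * (q * q ^+ j).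
  by rewrite !exprD !exprS.
set M := (j.+1 + r.+1 + j.+1)%N in eM *.
clearbody M.
rewrite (qpochSl (k / q)) divfK // (qpochS k q r) (qpochS q q r.+1) (qpochS k q M) (qpochS (q * q) q M).
move: (nq r.+1) (nq2 M) (n1 r.+1) (n2 M).
move: (qpoch q q r.+1) (qpoch k q r) (qpoch (q * q) q M) (qpoch k q M) => A B C D nA nC h1 h2.
rewrite eM in h2 *.
rewrite !exprD !exprS.
rewrite !exprS in h1.
move: (ne j) (ne r) h1 h2.
move: (q ^+ j) (q ^+ r) => y z ny nz h1 h2.
field.
by rewrite h2 nC nA nz hq0 ny h1.
Qed.

Lemma part2 q k (hq0 : q != 0) (hq : forall i : nat, (0 < i)%N -> q ^+ i != 1) :
  WP_Bailey_pair q k q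
    (fun n => if n == 0%N then 1 else q ^- n - q ^+ n.+1)
    (fun n => if n == 0%N then 1 else
       qpoch k q n * qpoch k q n.-1
         * (1 - k * q ^+ n.-1 - k * q ^+ n + k * q ^+ (2 * n))
       / (q ^+ n * (qpoch q q n * qpoch (q ^+ 2) q n))).
Proof.
split => // -[|n].
  rewrite big_ord1 /= !qpoch0.
  by rewrite !(mul1r, invr1, mulr1).
rewrite (eq_bigr (fun j : 'I_n.+2 => f2 q k n.+1 j)) //.
rewrite big_ord_recl (@tele (f2 q k n.+1) (G2 q k n.+1)); last by move=> j j0 jN; apply: step2.
rewrite /f2 /G2 subnn expr0 subrr mulr0 mul0r subr0.
have -> : (n.+1 == 0%N) = false by [].
rewrite (_ : (nat_of_ord (@ord0 n.+1) == 0%N) = true) // subn0 addn0 mulr1.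
rewrite subSS !subn0 addn1 /= expr2.
rewrite (qpochSl (k / q)) divfK // (qpochS k q n.+1) (qpochS k q n) (qpochS (q * q) q n.+1).
rewrite (_ : (2 * n.+1)%N = (n.+1 + n.+1)%N); last by rewrite mul2n addnn.
have qq : forall m, qpoch q q m = qpoch (q ^+ 0.+1) q m by move=> m; rewrite expr1.
have nq : forall m, qpoch q q m != 0 by move=> m; rewrite qq qpoch_neq0.
have qq2 : forall m, qpoch (q * q) q m = qpoch (q ^+ 1.+1) q m by move=> m; rewrite expr2.
have nq2 : forall m, qpoch (q * q) q m != 0 by move=> m; rewrite qq2 qpoch_neq0.
have ne : forall m, q ^+ m != 0 by move=> m; rewrite expf_neq0.
have n2 : forall m, 1 - q * q * q ^+ m != 0.
  by move=> m; rewrite subr_eq0 eq_sym -mulrA -exprS -exprS hq.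
move: (nq n.+1) (nq2 n.+1) (n2 n.+1).
move: (qpoch q q n.+1) (qpoch k q n) (qpoch (q * q) q n.+1) => A B C nA nC h2.
rewrite !exprD !exprS.
rewrite !exprS in h2.
move: (ne n) h2.
move: (q ^+ n) => x nx h2.
field.
by rewrite h2 nC nA nx hq0.
Qed.
End H.

Theorem mainTheorem9 (F : fieldType) (q k : F)
    (hq0 : q != 0) (hq : forall i : nat, (0 < i)%N -> q ^+ i != 1)
    (hk : k != 1) :
  WP_Bailey_pair 1 k q
    (fun n => if n == 0%N then 1 else q ^- n - q ^+ n)
    (fun n => if n == 0%N then 1 else
       qpoch k q n * qpoch k q n * (1 - 2 * k * q ^+ n + k * q ^+ (2 * n))
       / ((1 - k) * q ^+ n * (qpoch q q n * qpoch q q n)))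
  /\
  WP_Bailey_pair q k q
    (fun n => if n == 0%N then 1 else q ^- n - q ^+ n.+1)
    (fun n => if n == 0%N then 1 else
       qpoch k q n * qpoch k q n.-1
         * (1 - k * q ^+ n.-1 - k * q ^+ n + k * q ^+ (2 * n))
       / (q ^+ n * (qpoch q q n * qpoch (q ^+ 2) q n))).
Proof. by split; [apply: part1 | apply: part2]. Qed.
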